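(* Let $A\in\mathbb{R}^{n\times n}$, $B\in\mathbb{R}^{n\times m}$, $C\in\mathbb{R}^{p\times n}$ with $(A,C)$ observable and $(A,B)$ reachable, let $\ell$ be the observability index of $(A,C)$, and let $\mathbf{A}_\ell,\mathbf{B}_\ell$ be as in the context. Then the pair $(\mathbf{A}_\ell,\mathbf{B}_\ell)$ is reachable if and only if $p\ell=n$.
   Context: The observability index $\ell$ of an observable pair $(A,C)$ is the smallest $l$ with $\operatorname{rank}[C;CA;\dots;CA^{l-1}]=n$. Define $\mathcal{O}_\ell=[C;CA;\dots;CA^{\ell-1}]$; $\mathcal{T}_\ell\in\mathbb{R}^{p\ell\times m\ell}$ block lower triangular with $(i,j)$ block equal to $CA^{i-j-1}B$ if $i>j$ and $0$ otherwise; $\mathcal{R}_\ell=[A^{\ell-1}B\ \cdots\ AB\ B]$; $\mathcal{O}_\ell^{L}$ a fixed left inverse of $\mathcal{O}_\ell$. $\mathbf{F}_\ell=\mathrm{blockdiag}(S_p,S_m)$ where $S_q\in\mathbb{R}^{q\ell\times q\ell}$ has blocks $I_q$ at block positions $(i,i+1)$, $i=1,\dots,\ell-1$, zeros elsewhere; $\mathbf{L}_\ell\in\mathbb{R}^{(p\ell+m\ell)\times p}$ has $I_p$ in rows $p\ell-p+1,\dots,p\ell$, zeros elsewhere; $\mathbf{B}_\ell\in\mathbb{R}^{(p\ell+m\ell)\times m}$ has $I_m$ in its last $m$ rows, zeros elsewhere. $Z_\ell=[CA^\ell\mathcal{O}_\ell^L\ \ C\mathcal{R}_\ell-CA^\ell\mathcal{O}_\ell^L\mathcal{T}_\ell]$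 and $\mathbf{A}_\ell=\mathbf{F}_\ell+\mathbf{L}_\ell Z_\ell$. *)

(* Defs.v *)
From mathcomp Require Import all_boot all_order all_algebra.
Set Implicit Arguments. Unset Strict Implicit. Unset Printing Implicit Defensive.
Import GRing.Theory Num.Theory.
Local Open Scope ring_scope.

(* Block indexing: an index i : 'I_(q * l) of a vector made of l blocks of
   size q is split into its block number (0-based, < l) and its position
   inside the block (0-based, < q): i = q * blk_hi i + blk_lo i. *)
Lemma blk_hi_proof (q l : nat) (i : 'I_(q * l)) : (i %/ q < l)%N.
Proof. case: q i => [|q] [i Hi] //=; by rewrite ltn_divLR // mulnC. Qed.

Lemma blk_lo_proof (q l : nat) (i : 'I_(q * l)) : (i %% q < q)%N.
Proof. case: q i => [|q] [i Hi] //=; by rewrite ltn_mod. Qed.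

Definition blk_hi (q l : nat) (i : 'I_(q * l)) : 'I_l := Ordinal (blk_hi_proof i).
Definition blk_lo (q l : nat) (i : 'I_(q * l)) : 'I_q := Ordinal (blk_lo_proof i).

Section Defs.
Variable R : fieldType.

(* O_l = [C; CA; ...; CA^(l-1)] *)
Definition obsv_mx (n p : nat) (A : 'M[R]_n) (C : 'M[R]_(p, n)) (l : nat)
  : 'M[R]_(p * l, n) :=
  \matrix_(i, j) (C *m A ^+ (blk_hi i)) (blk_lo i) j.

(* Reachability (controllability) matrix [B AB ... A^(k-1)B] *)
Definition ctrb_mx (n m : nat) (A : 'M[R]_n) (B : 'M[R]_(n, m)) (k : nat)
  : 'M[R]_(n, m * k) :=
  \matrix_(a, j) (A ^+ (blk_hi j) *m B) a (blk_lo j).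

Definition observable (n p : nat) (A : 'M[R]_n) (C : 'M[R]_(p, n)) : bool :=
  \rank (obsv_mx A C n) == n.

Definition reachable (n m : nat) (A : 'M[R]_n) (B : 'M[R]_(n, m)) : bool :=
  \rank (ctrb_mx A B n) == n.

Definition is_obs_index (n p : nat) (A : 'M[R]_n) (C : 'M[R]_(p, n)) (l : nat)
  : Prop :=
  \rank (obsv_mx A C l) = n /\ forall k, (k < l)%N -> \rank (obsv_mx A C k) != n.

(* T_l : block lower triangular, (i,j) block = C A^(i-j-1) B if i > j, else 0 *)
Definition toep_mx (n m p : nat) (A : 'M[R]_n) (B : 'M[R]_(n, m))
  (C : 'M[R]_(p, n)) (l : nat) : 'M[R]_(p * l, m * l) :=
  \matrix_(i, j)
    (if (blk_hi j < blk_hi i)%N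
     then (C *m A ^+ (blk_hi i - blk_hi j - 1) *m B) (blk_lo i) (blk_lo j)
     else 0).

(* R_l = [A^(l-1)B ... AB B] *)
Definition rev_ctrb_mx (n m : nat) (A : 'M[R]_n) (B : 'M[R]_(n, m)) (l : nat)
  : 'M[R]_(n, m * l) :=
  \matrix_(a, j) (A ^+ (l - 1 - blk_hi j) *m B) a (blk_lo j).

(* S_q : identity blocks I_q at block positions (i, i+1) *)
Definition shift_mx (q l : nat) : 'M[R]_(q * l) :=
  \matrix_(i, j) ((blk_hi j == (blk_hi i).+1 :> nat) && (blk_lo i == blk_lo j))%:R.

(* q*l x q matrix with I_q in its last q rows (last block) *)
Definition last_blk_mx (q l : nat) : 'M[R]_(q * l, q) :=
  \matrix_(i, j) ((blk_hi i == l.-1 :> nat) && (blk_lo i == j))%:R.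

Definition bF (p m l : nat) : 'M[R]_(p * l + m * l) :=
  block_mx (shift_mx p l) 0 0 (shift_mx m l).

Definition bL (p m l : nat) : 'M[R]_(p * l + m * l, p) :=
  col_mx (last_blk_mx p l) 0.

Definition bB (p m l : nat) : 'M[R]_(p * l + m * l, m) :=
  col_mx 0 (last_blk_mx m l).

Definition bZ (n m p : nat) (A : 'M[R]_n) (B : 'M[R]_(n, m)) (C : 'M[R]_(p, n))
  (l : nat) (OL : 'M[R]_(n, p * l)) : 'M[R]_(p, p * l + m * l) :=
  row_mx (C *m A ^+ l *m OL)
         (C *m rev_ctrb_mx A B l - C *m A ^+ l *m OL *m toep_mx A B C l).

Definition bA (n m p : nat) (A : 'M[R]_n) (B : 'M[R]_(n, m)) (C : 'M[R]_(p, n))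
  (l : nat) (OL : 'M[R]_(n, p * l)) : 'M[R]_(p * l + m * l) :=
  bF p m l + bL p m l *m bZ A B C OL.

End Defs.

(* Main.v *)
Require Import Defs.
From mathcomp Require Import all_boot all_order all_algebra zify.
Import GRing.Theory Num.Theory.
Set Implicit Arguments. Unset Strict Implicit. Unset Printing Implicit Defensive.
Local Open Scope ring_scope.

Lemma mk_proof (q l : nat) (a : 'I_l) (b : 'I_q) : (q * a + b < q * l)%N.
Proof. have := ltn_ord a; have := ltn_ord b; nia. Qed.
Definition mk (q l : nat) (a : 'I_l) (b : 'I_q) : 'I_(q * l) := Ordinal (mk_proof a b).

Lemma blk_val (q l : nat) (i : 'I_(q * l)) : (i : nat) = q * blk_hi i + blk_lo i.
Proof. by rewrite /= {1}(divn_eq i q) mulnC. Qed.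

Lemma hi_mk (q l : nat) (a : 'I_l) (b : 'I_q) : blk_hi (mk a b) = a.
Proof.
apply: val_inj => /=; rewrite /=; have qp : (0 < q)%N by case: b => b /=; lia.
by rewrite mulnC divnMDl // divn_small // addn0.
Qed.
Lemma lo_mk (q l : nat) (a : 'I_l) (b : 'I_q) : blk_lo (mk a b) = b.
Proof. by apply: val_inj => /=; rewrite mulnC modnMDl modn_small. Qed.

Lemma idx_eq (q l : nat) (i j : 'I_(q * l)) :
  (i == j) = ((blk_hi i == blk_hi j :> nat) && (blk_lo i == blk_lo j :> nat)).
Proof.
apply/eqP/andP => [->|[/eqP h1 /eqP h2]]; first by [].
by apply: val_inj; rewrite /= (blk_val i) (blk_val j) h1 h2.
Qed.

Lemma hi_lt (q l : nat) (i : 'I_(q * l)) : (blk_hi i < l)%N.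
Proof. exact: ltn_ord. Qed.
Lemma lo_lt (q l : nat) (i : 'I_(q * l)) : (blk_lo i < q)%N.
Proof. exact: ltn_ord. Qed.

Arguments blk_hi : simpl never.
Arguments blk_lo : simpl never.
Section S.
Variable R : fieldType.

Lemma sum_delta (k : nat) (P : pred 'I_k) (j0 : 'I_k) (F : 'I_k -> R) :
  (forall j, P j = (j == j0)) -> \sum_j (P j)%:R * F j = F j0.
Proof.
move=> HP; rewrite (bigD1 j0) //= HP eqxx mul1r big1 ?addr0 // => j /negbTE.
by rewrite HP => ->; rewrite mul0r.
Qed.
Lemma sum_delta0 (k : nat) (P : pred 'I_k) (F : 'I_k -> R) :
  (forall j, P j = false) -> \sum_j (P j)%:R * F j = 0.
Proof. by move=> HP; rewrite big1 // => j _; rewrite HP mul0r. Qed.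
Lemma sum_deltar (k : nat) (P : pred 'I_k) (j0 : 'I_k) (F : 'I_k -> R) :
  (forall j, P j = (j == j0)) -> \sum_j F j * (P j)%:R = F j0.
Proof. by move=> HP; rewrite -(sum_delta F HP); apply: eq_bigr => j _; rewrite mulrC. Qed.
Lemma sum_delta0r (k : nat) (P : pred 'I_k) (F : 'I_k -> R) :
  (forall j, P j = false) -> \sum_j F j * (P j)%:R = 0.
Proof. by move=> HP; rewrite big1 // => j _; rewrite HP mulr0. Qed.

Lemma oeq (k : nat) (i j : 'I_k) : (i == j) = (i == j :> nat).
Proof. by []. Qed.

Lemma G_entry (m l i : nat) (r : 'I_(m * l)) (c : 'I_m) :
  ((shift_mx R m l ^+ i) *m last_blk_mx R m l) r c =
  ((blk_hi r + i == l.-1)%N && (blk_lo r == c))%:R.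
Proof.
elim: i r => [|i IH] r; first by rewrite expr0 mul1mx mxE addn0.
rewrite exprS -mulmxE -mulmxA mxE.
under eq_bigr => j _ do rewrite IH mxE.
have [h|h] := ltnP (blk_hi r).+1 l.
  rewrite (sum_delta (j0 := mk (Ordinal h) (blk_lo r))) ?hi_mk ?lo_mk /=.
    by rewrite addSnnS.
  move=> j; rewrite idx_eq hi_mk lo_mk /= -!val_eqE /=. apply/idP/idP; lia.
rewrite sum_delta0; last by move=> j; have := hi_lt j; rewrite !oeq; lia.
by rewrite oeq; have := hi_lt r; case: eqP => //; lia.
Qed.

Ltac blia0 := rewrite -?val_eqE /=; try (apply/idP/idP); lia.
Ltac blia := rewrite ?oeq; try (apply/idP/idP); lia.

Definition E1 (m l : nat) : 'M[R]_(m, m * l) :=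
  \matrix_(b, j) ((blk_hi j == 0%N :> nat) && (blk_lo j == b))%:R.
Definition Gm (m l i : nat) : 'M[R]_(m * l, m) := shift_mx R m l ^+ i *m last_blk_mx R m l.

Lemma E1G (m l i : nat) (b c : 'I_m) :
  (E1 m l *m Gm m l i) b c = ((0 < l)%N && (i == l.-1) && (b == c))%:R.
Proof.
rewrite mxE; under eq_bigr => j _ do rewrite G_entry mxE.
case: l => [|l].
  by rewrite sum_delta0 // => j; have := hi_lt j.
rewrite (sum_delta (j0 := mk (@ord0 l) b)) ?hi_mk ?lo_mk /=; first by congr (_%:R); blia0.
by move=> j; rewrite idx_eq hi_mk lo_mk; blia0.
Qed.

Lemma G_last (m l : nat) : Gm m l l = 0.
Proof. apply/matrixP => r c; rewrite /Gm G_entry mxE; have := hi_lt r; case: eqP => [h1 h2|//]; exfalso; move: h1 h2; move: (nat_of_ord (blk_hi r)) => y; lia. Qed.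

Definition Ahat (n m l : nat) (A : 'M[R]_n) (B : 'M[R]_(n, m)) : 'M[R]_(n + m * l) :=
  block_mx A (B *m E1 m l) 0 (shift_mx R m l).
Definition Bhat (n m l : nat) : 'M[R]_(n + m * l, m) := col_mx 0 (last_blk_mx R m l).

Lemma E1G0 (m l i : nat) : i != l.-1 -> E1 m l *m Gm m l i = 0.
Proof. by move=> h; apply/matrixP => b c; rewrite E1G mxE (negbTE h) andbF. Qed.
Lemma E1G1 (m l : nat) : (0 < l)%N -> E1 m l *m Gm m l l.-1 = 1%:M.
Proof. by move=> h; apply/matrixP => b c; rewrite E1G !mxE h eqxx. Qed.

Lemma Ahat_lt (n m l : nat) (A : 'M[R]_n) (B : 'M[R]_(n, m)) i : (i < l)%N ->
  Ahat l A B ^+ i *m Bhat n m l = col_mx 0 (Gm m l i).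
Proof.
elim: i => [|i IH] h; first by rewrite /Gm !expr0 !mul1mx.
rewrite exprS -mulmxE -mulmxA IH; last by apply: ltnW.
rewrite mul_block_col !mulmx0 !add0r -mulmxA E1G0; last by rewrite -subn1; lia.
by rewrite mulmx0 /Gm mulmxA mulmxE -exprS.
Qed.

Lemma Ahat_ge (n m l : nat) (A : 'M[R]_n) (B : 'M[R]_(n, m)) j : (0 < l)%N ->
  Ahat l A B ^+ (l + j) *m Bhat n m l = col_mx (A ^+ j *m B) 0.
Proof.
move=> lp; elim: j => [|j IH].
  rewrite addn0 -[X in _ ^+ X](prednK lp) exprS -mulmxE -mulmxA Ahat_lt; last by rewrite prednK.
  rewrite mul_block_col !mulmx0 ?add0r ?addr0 -mulmxA E1G1 // mulmx1 expr0 mul1mx.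
  by rewrite /Gm mulmxA mulmxE -exprS (prednK lp) -/(Gm m l l) G_last.
rewrite addnS exprS -mulmxE -mulmxA IH mul_block_col !mulmx0 ?mul0mx ?addr0.
by rewrite mulmxA mulmxE -exprS.
Qed.

Lemma pow_sim (a b : nat) (M : 'M[R]_a) (M' : 'M[R]_b) (P : 'M[R]_(a, b)) i :
  M *m P = P *m M' -> M ^+ i *m P = P *m M' ^+ i.
Proof.
move=> h; elim: i => [|i IH]; first by rewrite !expr0 mul1mx mulmx1.
by rewrite exprS -mulmxE -mulmxA IH mulmxA h -mulmxA mulmxE -exprS.
Qed.

Lemma ctrb_sim (a b m k : nat) (M : 'M[R]_a) (M' : 'M[R]_b) (P : 'M[R]_(a, b))
  (B' : 'M[R]_(b, m)) :
  M *m P = P *m M' -> ctrb_mx M (P *m B') k = P *m ctrb_mx M' B' k.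
Proof.
move=> h; apply/matrixP => r j; rewrite [LHS]mxE mulmxA (pow_sim _ h) -mulmxA.
rewrite [LHS]mxE [RHS]mxE; by apply: eq_bigr => t _; rewrite [in RHS]mxE.
Qed.

Lemma ctrb_row0 (a m k : nat) (M : 'M[R]_a) (Bm : 'M[R]_(a, m)) (v : 'rV[R]_a) :
  v *m ctrb_mx M Bm k = 0 <-> (forall i, (i < k)%N -> v *m (M ^+ i *m Bm) = 0).
Proof.
have E : forall j, (v *m ctrb_mx M Bm k) 0 j = (v *m (M ^+ blk_hi j *m Bm)) 0 (blk_lo j).
  move=> j; rewrite [LHS]mxE [RHS]mxE; by apply: eq_bigr => t _; rewrite [in LHS]mxE.
split => [h i ik|h].
  apply/matrixP => x c; rewrite (ord1 x) [RHS]mxE.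
  by have := E (mk (Ordinal ik) c); rewrite h hi_mk lo_mk mxE /= => <-.
apply/matrixP => x j; rewrite (ord1 x) E h ?mxE //; exact: hi_lt.
Qed.

Lemma obsv_mul (n p l k : nat) (A : 'M[R]_n) (C : 'M[R]_(p, n)) (X : 'M[R]_(n, k)) r c :
  (obsv_mx A C l *m X) r c = ((C *m A ^+ blk_hi r) *m X) (blk_lo r) c.
Proof. by rewrite !mxE; apply: eq_bigr => t _; rewrite mxE. Qed.

Lemma E_a (n p l : nat) (A : 'M[R]_n) (C : 'M[R]_(p, n)) :
  shift_mx R p l *m obsv_mx A C l + last_blk_mx R p l *m (C *m A ^+ l) =
  obsv_mx A C l *m A.
Proof.
apply/matrixP => r c; rewrite obsv_mul -mulmxA mulmxE -exprSr !mxE.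
under eq_bigr => j _ do rewrite !mxE.
under [X in _ + X = _]eq_bigr => j _ do rewrite !mxE.
have [h|h] := ltnP (blk_hi r).+1 l.
  rewrite (sum_delta (j0 := mk (Ordinal h) (blk_lo r))); last first.
    by move=> j; rewrite idx_eq hi_mk lo_mk; blia0.
  rewrite sum_delta0 ?addr0 ?hi_mk ?lo_mk //.
  by move=> j; apply/negbTE; rewrite negb_and; apply/orP; left; rewrite -subn1; lia.
have e : (blk_hi r).+1 = l by have := hi_lt r; lia.
rewrite sum_delta0 ?add0r; last first.
  by move=> j; apply/negbTE; rewrite negb_and; apply/orP; left; have := hi_lt j; lia.
have h2 : (blk_hi r == l.-1 :> nat) by apply/eqP; rewrite -subn1; lia.
rewrite (sum_delta (j0 := blk_lo r)); last by move=> b; rewrite h2 /= eq_sym.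
by rewrite -[in X in _ ^+ X]e.
Qed.

Definition mkn (q l a : nat) (ha : (a < l)%N) (b : 'I_q) : 'I_(q * l) := mk (Ordinal ha) b.
Lemma hi_mkn (q l a : nat) (ha : (a < l)%N) (b : 'I_q) : (blk_hi (mkn ha b) : nat) = a.
Proof. by rewrite /mkn hi_mk. Qed.
Lemma lo_mkn (q l a : nat) (ha : (a < l)%N) (b : 'I_q) : blk_lo (mkn ha b) = b.
Proof. by rewrite /mkn lo_mk. Qed.

Lemma comb (l x y : nat) (F : nat -> R) : (x < l)%N -> (y < l)%N ->
 (if (x.+1 < l)%N then (if (y < x.+1)%N then F (x.+1 - y - 1)%N else 0) else 0)
   + (if x == l.-1 then F (l - 1 - y)%N else 0) =
 (if y == 0%N then F x else 0) + (if (0 < y)%N then (if (y.-1 < x)%N then F (x - y.-1 - 1)%N else 0) else 0).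
Proof.
move=> hx hy.
repeat (case: ifP; intro); rewrite ?addr0 ?add0r //; try (exfalso; lia); congr F; lia.
Qed.

Section Eb.
Variables (n m p l : nat) (A : 'M[R]_n) (B : 'M[R]_(n, m)) (C : 'M[R]_(p, n)).
Variables (r : 'I_(p * l)) (c : 'I_(m * l)).
Let F e := (C *m A ^+ e *m B) (blk_lo r) (blk_lo c).

Lemma T1 : (shift_mx R p l *m toep_mx A B C l) r c =
  if ((blk_hi r).+1 < l)%N then (if (blk_hi c < (blk_hi r).+1)%N
     then F ((blk_hi r).+1 - blk_hi c - 1)%N else 0) else 0.
Proof.
rewrite mxE; under eq_bigr => j _ do rewrite !mxE.
case: ifP => h.
  rewrite (sum_delta (j0 := mkn h (blk_lo r))); last first.
    by move=> j; rewrite idx_eq hi_mkn lo_mkn; blia.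
  by rewrite hi_mkn lo_mkn /F [in RHS]mxE.
by rewrite sum_delta0 // => j; apply/negbTE; rewrite negb_and; apply/orP; left; have := hi_lt j; lia.
Qed.

Lemma T2 : (last_blk_mx R p l *m (C *m rev_ctrb_mx A B l)) r c =
  if (blk_hi r == l.-1 :> nat) then F (l - 1 - blk_hi c)%N else 0.
Proof.
rewrite mxE; under eq_bigr => j _ do rewrite !mxE.
case: ifP => h.
  rewrite (sum_delta (j0 := blk_lo r)); last by move=> b; rewrite /= eq_sym.
  rewrite /F -mulmxA [in RHS]mxE; apply: eq_bigr => t _; by rewrite [in LHS]mxE.
by rewrite big1 // => j _; rewrite /= mul0r.
Qed.

Lemma T3 : (obsv_mx A C l *m (B *m E1 m l)) r c =
  if (blk_hi c == 0%N :> nat) then F (blk_hi r) else 0.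
Proof.
rewrite obsv_mul mulmxA mxE; under eq_bigr => j _ do rewrite !mxE.
case: ifP => h.
  by rewrite (sum_deltar (j0 := blk_lo c)) ?/F ?[in RHS]mxE // => b; rewrite /= eq_sym.
by rewrite big1 // => j _; rewrite /= mulr0.
Qed.

Lemma T4 : (toep_mx A B C l *m shift_mx R m l) r c =
  if (0 < blk_hi c)%N then (if ((blk_hi c).-1 < blk_hi r)%N
     then F (blk_hi r - (blk_hi c).-1 - 1)%N else 0) else 0.
Proof.
rewrite mxE; under eq_bigr => j _ do rewrite !mxE.
case: ifP => h.
  have h' : ((blk_hi c).-1 < l)%N by have := hi_lt c; lia.
  rewrite (sum_deltar (j0 := mkn h' (blk_lo c))); last first.
    by move=> j; rewrite idx_eq hi_mkn lo_mkn; blia.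
  by rewrite hi_mkn lo_mkn /F [in RHS]mxE.
by rewrite sum_delta0r // => j; apply/negbTE; rewrite negb_and; apply/orP; left; lia.
Qed.

Lemma E_b : (shift_mx R p l *m toep_mx A B C l + last_blk_mx R p l *m (C *m rev_ctrb_mx A B l)) r c
  = (obsv_mx A C l *m (B *m E1 m l) + toep_mx A B C l *m shift_mx R m l) r c.
Proof.
rewrite [LHS]mxE [RHS]mxE T1 T2 T3 T4; apply: comb; exact: hi_lt.
Qed.
End Eb.

Lemma E_c (n m p l : nat) (A : 'M[R]_n) (B : 'M[R]_(n, m)) (C : 'M[R]_(p, n)) :
  toep_mx A B C l *m last_blk_mx R m l = 0.
Proof.
apply/matrixP => r c; rewrite [RHS]mxE mxE; under eq_bigr => j _ do rewrite [X in _ * X]mxE.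
have h : (l.-1 < l)%N by have := hi_lt r; lia.
rewrite (sum_deltar (j0 := mkn h c)); last by move=> j; rewrite idx_eq hi_mkn lo_mkn; blia.
rewrite mxE hi_mkn ifF //; apply/negbTE; rewrite -leqNgt; have := hi_lt r; lia.
Qed.

Definition Pm (n m p l : nat) (A : 'M[R]_n) (B : 'M[R]_(n, m)) (C : 'M[R]_(p, n)) :
  'M[R]_(p * l + m * l, n + m * l) :=
  block_mx (obsv_mx A C l) (toep_mx A B C l) 0 1%:M.
Definition Qm (n m p l : nat) (A : 'M[R]_n) (B : 'M[R]_(n, m)) (C : 'M[R]_(p, n))
  (OL : 'M[R]_(n, p * l)) : 'M[R]_(n + m * l, p * l + m * l) :=
  block_mx OL (- (OL *m toep_mx A B C l)) 0 1%:M.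

Lemma QP (n m p l : nat) (A : 'M[R]_n) (B : 'M[R]_(n, m)) (C : 'M[R]_(p, n))
  (OL : 'M[R]_(n, p * l)) : OL *m obsv_mx A C l = 1%:M ->
  Qm A B C OL *m Pm l A B C = 1%:M.
Proof.
move=> h; rewrite /Qm /Pm mulmx_block !mulmx0 !mul0mx !mulmx1 !addr0 add0r h addrN.
by rewrite [RHS]scalar_mx_block.
Qed.

Lemma BP (n m p l : nat) (A : 'M[R]_n) (B : 'M[R]_(n, m)) (C : 'M[R]_(p, n)) :
  bB R p m l = Pm l A B C *m Bhat n m l.
Proof.
by rewrite /bB /Bhat /Pm mul_block_col !mulmx0 E_c mul1mx !addr0 ?add0r.
Qed.

Lemma AP (n m p l : nat) (A : 'M[R]_n) (B : 'M[R]_(n, m)) (C : 'M[R]_(p, n))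
  (OL : 'M[R]_(n, p * l)) : OL *m obsv_mx A C l = 1%:M ->
  bA A B C OL *m Pm l A B C = Pm l A B C *m Ahat l A B.
Proof.
move=> h; rewrite /bA /bF /bL /bZ mul_col_row add_block_mx /Pm /Ahat !mulmx_block.
rewrite !mul0mx !mulmx0 !addr0 !add0r !mulmx1 !mul1mx.
congr block_mx.
  rewrite mulmxDl -!mulmxA h mulmx1; exact: E_a.
rewrite mulmxDl mulmxBr -!mulmxA addrACA addrN addr0.
  by apply/matrixP => r c; apply: E_b.
  by rewrite mul0mx.
by rewrite mul0mx add0r.
Qed.

Lemma RF (n m l k : nat) (A : 'M[R]_n) (B : 'M[R]_(n, m)) :
  reachable A B -> (l = 0%N -> n = 0%N) -> (n + l <= k)%N ->
  row_free (ctrb_mx (Ahat l A B) (Bhat n m l) k).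
Proof.
move=> hR hl hk; apply: inj_row_free => w /ctrb_row0 hi.
case: (posnP l) => [l0|lp].
  have n0 := hl l0; subst l n.
  by apply/rowP => i; exfalso; have := ltn_ord i; move: (nat_of_ord i) => x; rewrite muln0 addn0.
have hu : rsubmx w = 0.
  apply/rowP => r.
  have ir : (l.-1 - blk_hi r < k)%N by have := hi_lt r; rewrite -subn1; lia.
  have := hi _ ir; rewrite -[w]hsubmxK Ahat_lt; last by rewrite -subn1; lia.
  rewrite mul_row_col mulmx0 add0r row_mxKr.
  move/matrixP/(_ 0 (blk_lo r)) => H; rewrite [RHS]mxE; rewrite mxE [RHS]mxE in H; rewrite -H; symmetry.
  under eq_bigr => t _ do rewrite /Gm G_entry.
  rewrite (sum_deltar (j0 := r)) // => t; rewrite idx_eq.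
  have := hi_lt t; have := hi_lt r; rewrite -subn1 => h1 h2; blia.
have hx : lsubmx w = 0.
  apply: (row_free_inj (hR : row_free _)); rewrite mul0mx.
  apply/ctrb_row0 => i ilt.
  have := hi (l + i)%N; rewrite -[w]hsubmxK Ahat_ge // mul_row_col mulmx0 addr0 row_mxKl.
  by apply; lia.
by rewrite -[w]hsubmxK hu hx row_mx0.
Qed.
End S.

Theorem lemma2 (R : realFieldType) (n m p : nat)
  (A : 'M[R]_n) (B : 'M[R]_(n, m)) (C : 'M[R]_(p, n)) (l : nat)
  (OL : 'M[R]_(n, p * l)) :
  observable A C -> reachable A B -> is_obs_index A C l ->
  OL *m obsv_mx A C l = 1%:M ->
  reachable (bA A B C OL) (bB R p m l) <-> (p * l = n)%N.
Proof.
move=> hobs hR [hrk hmin] hOL.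
set K := ctrb_mx (Ahat l A B) (Bhat R n m l) (p * l + m * l).
have E : ctrb_mx (bA A B C OL) (bB R p m l) (p * l + m * l) = Pm l A B C *m K.
  by rewrite (BP l A B C); apply: ctrb_sim; apply: AP.
have rk : \rank (Pm l A B C *m K) = \rank K.
  apply/eqP; rewrite eqn_leq mxrankM_maxr /=.
  by have := mxrankM_maxr (Qm A B C OL) (Pm l A B C *m K); rewrite mulmxA QP // mul1mx.
have hO := rank_leq_row (obsv_mx A C l); rewrite hrk in hO.
rewrite /reachable E rk; split.
  move/eqP => h; have := rank_leq_row K; lia.
move=> hpl; case: (posnP m) => [m0|mp].
  have := rank_leq_col (ctrb_mx A B n); have hR2 : \rank (ctrb_mx A B n) = n by apply/eqP.
  rewrite hR2 => hn.
  have := rank_leq_row K => hK; apply/eqP; nia.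
have := @RF R n m l (p * l + m * l)%N A B hR.
have hl : l = 0%N -> n = 0%N by move=> l0; move: hO; rewrite l0; lia.
move=> /(_ hl) /(_ ltac:(nia)) /eqP ->; apply/eqP; lia.
Qed.
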